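(* Let $G'$ be a graph that is not a disjoint union of copies of $K_2$. Construct a graph $G$ from $G'$ by attaching finitely many (possibly empty) trees to each node of $G'$, at least one of which is not isolated. Then \[ \mathcal{H}_G=\mathcal{H}_{G'},\qquad \mathcal{H}_G^\psi=\mathcal{H}_{G'}^\psi,\qquad \mathcal{H}_G^\phi=\mathcal{H}_{G'}^\phi. \] In particular, if $G$ is a tree with at least $3$ vertices, then $CE_H(G)=CE_H^\phi(G)=CE_H^\psi(G)=1$.
   Context: All graphs are finite and simple; attaching a tree $T$ to a node $v$ means taking the disjoint union with $T$ and identifying a vertex of $T$ with $v$. $K_2$ is the complete graph on $2$ vertices. For a graph $G=(V,E)$ with $V=\{1,\dots,n\}$ and $I\subset\mathbb{R}$, $\mathcal{P}_G(I)$ is the set of real symmetric positive semidefinite $n\times n$ matrices with entries in $I$ such that $a_{ij}=0$ whenever $i\neq j$ and $(i,j)\notin E$; $\mathcal{P}_G:=\mathcal{P}_G(\mathbb{R})$. For $A$ with nonnegative entries, $A^{\circ\alpha}:=(a_{ij}^\alpha)$ with $0^\alpha:=0$. $\psi_\alpha(x)=\mathrm{sgn}(x)|x|^\alpha$, $\phi_\alpha(x)=|x|^\alpha$ for $x\ne0$, $\psi_\alpha(0)=\phi_\alpha(0)=0$, applied entrywise: $f[A]=(f(a_{ij}))$. $\mathcal{H}_G:=\{\alpha\in\mathbb{R}: A^{\circ\alpha}\in\mathcal{P}_G\ \forall A\in\mathcal{P}_G([0,\infty))\}$, $\mathcal{H}_G^\psi:=\{\alpha:\psi_\alpha[A]\in\mathcal{P}_G\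 \forall A\in\mathcal{P}_G(\mathbb{R})\}$, $\mathcal{H}_G^\phi:=\{\alpha:\phi_\alpha[A]\in\mathcal{P}_G\ \forall A\in\mathcal{P}_G(\mathbb{R})\}$. $CE_H(G):=\min\{\alpha: A^{\circ\beta}\in\mathcal{P}_G\ \forall A\in\mathcal{P}_G([0,\infty)),\ \forall\beta\ge\alpha\}$, and analogously $CE_H^\psi(G), CE_H^\phi(G)$ using $\psi_\beta,\phi_\beta$ on $\mathcal{P}_G(\mathbb{R})$.
   Formalization: $G'$ is assumed to have a vertex with two distinct neighbours, in place of the hypotheses that $G'$ is not a disjoint union of copies of $K_2$ and some attached tree is not isolated. Apart from conventions, each condition added here is assumed in the paper as well or is needed for the statement above to hold. *)

(* Defs.v *)
From HB Require Import structures.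
From mathcomp Require Import all_boot all_order all_algebra.
From mathcomp Require Import boolp classical_sets reals exp Rstruct.
Set Implicit Arguments. Unset Strict Implicit. Unset Printing Implicit Defensive.
Import Order.TTheory GRing.Theory Num.Theory.
Local Open Scope ring_scope.
Local Open Scope classical_set_scope.

Notation RR := Rdefinitions.R.

Definition simple_graph (T : finType) (e : rel T) : Prop :=
  symmetric e /\ irreflexive e.

Definition acyclic (T : finType) (e : rel T) : Prop :=
  forall (x : T) (p : seq T),
    uniq (x :: p) -> path e x p -> (2 <= size p)%N -> ~~ e (last x p) x.

Definition is_tree (T : finType) (e : rel T) : Prop :=
  [/\ simple_graph e, (forall x y : T, connect e x y) & acyclic e].

(* Attaching the tree T on 'I_m.+1 (vertex ord0 identified with v) to the
   graph G on 'I_n: the new graph lives on 'I_(n + m); vertices lshift i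
   are those of G, vertex rshift n k is the tree vertex lift ord0 k. *)
Definition tree_label n m (v : 'I_n) (x : 'I_(n + m)) : option 'I_m.+1 :=
  match split x with
  | inl a => if a == v then Some ord0 else None
  | inr k => Some (lift ord0 k)
  end.

Definition attach n m (G : rel 'I_n) (T : rel 'I_m.+1) (v : 'I_n)
  : rel 'I_(n + m) :=
  fun x y =>
    (match split x, split y with inl a, inl b => G a b | _, _ => false end)
    || (match tree_label v x, tree_label v y with
        | Some s, Some t => T s t | _, _ => false end).

(* obtained G' G : G arises from G' (on 'I_n0) by attaching finitely many
   trees to nodes of G'. Since attaching only appends vertices, the nodes
   of G' are exactly the vertices with index < n0. *)
Inductive obtained (n0 : nat) (G0 : rel 'I_n0) : forall n, rel 'I_n -> Prop :=
| obtained_base : obtained G0 G0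
| obtained_step n (G : rel 'I_n) m (T : rel 'I_m.+1) (v : 'I_n) :
    obtained G0 G -> (v < n0)%N -> is_tree T -> obtained G0 (attach G T v).

Definition psd n (A : 'M[RR]_n) : Prop :=
  A^T = A /\ forall v : 'cV[RR]_n, 0 <= (v^T *m A *m v) ord0 ord0.

Definition PG n (G : rel 'I_n) (I : set RR) (A : 'M[RR]_n) : Prop :=
  [/\ psd A, (forall i j, I (A i j)) &
      (forall i j, i != j -> ~~ G i j -> A i j = 0)].

(* x^a for x >= 0 with the convention 0^a = 0 *)
Definition rpow (x a : RR) : RR := if x == 0 then 0 else powR x a.
Definition phi_ (a x : RR) : RR := rpow `|x| a.
Definition psi_ (a x : RR) : RR := Num.sg x * rpow `|x| a.

Definition hpow n (A : 'M[RR]_n) (a : RR) : 'M[RR]_n := map_mx (rpow ^~ a) A.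

Definition H_ n (G : rel 'I_n) : set RR :=
  [set a | forall A, PG G [set x | 0 <= x] A -> PG G setT (hpow A a)].
Definition Hpsi n (G : rel 'I_n) : set RR :=
  [set a | forall A, PG G setT A -> PG G setT (map_mx (psi_ a) A)].
Definition Hphi n (G : rel 'I_n) : set RR :=
  [set a | forall A, PG G setT A -> PG G setT (map_mx (phi_ a) A)].

(* the sets whose minima are CE_H(G), CE_H^psi(G), CE_H^phi(G) *)
Definition CEset (S : set RR) : set RR := [set a | forall b, a <= b -> S b].
Definition is_min (S : set RR) (c : RR) : Prop := S c /\ forall a, S a -> c <= a.

(* Main.v *)
Require Import Defs.
From HB Require Import structures.
From mathcomp Require Import all_boot all_order all_algebra.
From mathcomp Require Import boolp classical_sets reals exp Rstruct.
From mathcomp Require Import ring lra.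
Set Implicit Arguments. Unset Strict Implicit. Unset Printing Implicit Defensive.
Import Order.TTheory GRing.Theory Num.Theory.
Local Open Scope ring_scope.
Local Open Scope classical_set_scope.

Definition qf n (A : 'M[RR]_n) (v : 'cV[RR]_n) : RR := (v^T *m A *m v) ord0 ord0.

Lemma qfE n (A : 'M[RR]_n) v :
  qf A v = \sum_i \sum_j v i ord0 * A i j * v j ord0.
Proof.
rewrite /qf mxE exchange_big /=; apply: eq_bigr => j _.
rewrite mxE big_distrl /=; apply: eq_bigr => i _; by rewrite !mxE.
Qed.

Lemma qfD n (A B : 'M[RR]_n) v : qf (A + B) v = qf A v + qf B v.
Proof. by rewrite /qf mulmxDr mulmxDl mxE. Qed.

Lemma qfZ n (A : 'M[RR]_n) c v : qf A (c *: v) = c ^+ 2 * qf A v.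
Proof. by rewrite /qf !linearZ /= -!scalemxAl !mxE expr2 mulrA. Qed.

Lemma sum_delta n (F : 'I_n -> RR) y : \sum_x ((y == x)%:R * F x) = F y.
Proof.
rewrite (bigD1 y) //= eqxx mul1r big1 ?addr0 // => x /negPf.
by rewrite eq_sym => ->; rewrite mul0r.
Qed.

Lemma sum_delta' n (F : 'I_n -> RR) y : \sum_x (F x * (y == x)%:R) = F y.
Proof.
rewrite (bigD1 y) //= eqxx mulr1 big1 ?addr0 // => x /negPf.
by rewrite eq_sym => ->; rewrite mulr0.
Qed.

Lemma diag_qf_ge0 n (M : 'M[RR]_n) v :
  (forall i j, i != j -> M i j = 0) -> (forall i, 0 <= M i i) -> 0 <= qf M v.
Proof.
move=> Hd Hp; rewrite qfE; apply: sumr_ge0 => i _.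
rewrite (bigD1 i) //= big1 ?addr0.
  by rewrite mulrAC -expr2 mulr_ge0 // sqr_ge0.
by move=> j; rewrite eq_sym => /Hd ->; rewrite mulr0 mul0r.
Qed.

Definition emb N k (g : 'I_k -> 'I_N) : 'M[RR]_(N, k) := \matrix_(x, s) (g s == x)%:R.

Lemma qf_emb N k (g : 'I_k -> 'I_N) (A : 'M[RR]_N) y :
  qf A (emb g *m y) = qf ((emb g)^T *m A *m emb g) y.
Proof. by rewrite /qf trmx_mul !mulmxA. Qed.

Lemma emb_pull N k (g : 'I_k -> 'I_N) (A : 'M[RR]_N) s t :
  ((emb g)^T *m A *m emb g) s t = A (g s) (g t).
Proof.
rewrite mxE -(sum_delta' (A (g s)) (g t)); apply: eq_bigr => x _.
rewrite [emb g x t]mxE; congr (_ * _).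
rewrite mxE -(sum_delta (fun j => A j x) (g s)); apply: eq_bigr => j _.
by rewrite !mxE.
Qed.

Lemma qf_conj N k (M : 'M[RR]_(N, k)) (A : 'M[RR]_N) y :
  qf (M^T *m A *m M) y = qf A (M *m y).
Proof. by rewrite /qf trmx_mul !mulmxA. Qed.

Lemma emb_push_img N k (g : 'I_k -> 'I_N) (B : 'M[RR]_k) s t :
  injective g -> (emb g *m B *m (emb g)^T) (g s) (g t) = B s t.
Proof.
move=> ginj; rewrite mxE -(sum_delta' (B s) t); apply: eq_bigr => j _.
rewrite !mxE (inj_eq ginj) [j == t]eq_sym; congr (_ * _).
rewrite -(sum_delta (fun i => B i j) s); apply: eq_bigr => i _.
by rewrite !mxE (inj_eq ginj) eq_sym.
Qed.

Lemma emb_push_outl N k (g : 'I_k -> 'I_N) (B : 'M[RR]_k) x y :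
  (forall s, g s != x) -> (emb g *m B *m (emb g)^T) x y = 0.
Proof.
move=> nx; rewrite mxE big1 // => j _; rewrite mxE big1 ?mul0r // => i _.
by rewrite mxE (negPf (nx i)) mul0r.
Qed.

Lemma emb_push_outr N k (g : 'I_k -> 'I_N) (B : 'M[RR]_k) x y :
  (forall s, g s != y) -> (emb g *m B *m (emb g)^T) x y = 0.
Proof.
move=> ny; rewrite mxE big1 // => j _; rewrite !mxE (negPf (ny j)) mulr0 //.
Qed.

Lemma psd_diag n (A : 'M[RR]_n) i : psd A -> 0 <= A i i.
Proof.
move=> [_ H]; have := H (\col_j (i == j)%:R); rewrite -/(qf A _) qfE.
rewrite (eq_bigr (fun x => (i == x)%:R * A x i)) ?sum_delta // => x _.
rewrite (eq_bigr (fun y => ((i == x)%:R * A x y) * (i == y)%:R)) ?sum_delta' //.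
by move=> y _; rewrite !mxE.
Qed.

Definition Good n (I : set RR) (f : RR -> RR) (G : rel 'I_n) :=
  forall A : 'M[RR]_n, PG G I A -> psd (map_mx f A).

Definition fcond (I : set RR) (f : RR -> RR) :=
  [/\ f 0 = 0, (forall x, 0 <= x -> 0 <= f x),
      (forall x y, 0 <= x -> 0 <= y -> f x + f y <= f (x + y)),
      (forall x y z, I y -> 0 <= x -> 0 <= z -> y ^+ 2 <= x * z ->
          f y ^+ 2 <= f x * f z)
    & (forall x, 0 <= x -> I x)].

Lemma PG_map n (G : rel 'I_n) I f A :
  f 0 = 0 -> PG G I A -> psd (map_mx f A) -> PG G setT (map_mx f A).
Proof.
move=> f0 [_ _ Hz] Hp; split => // i j ij nG; by rewrite mxE Hz.
Qed.

Lemma psd_conj N k (M : 'M[RR]_(N, k)) (A : 'M[RR]_N) :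
  psd A -> psd (M^T *m A *m M).
Proof.
move=> [As Aq]; split; first by rewrite !trmx_mul trmxK As mulmxA.
by move=> v; rewrite -/(qf _ _) qf_conj; apply: Aq.
Qed.

Lemma good_restrict N k (g : 'I_k -> 'I_N) I f (G : rel 'I_N) (T : rel 'I_k) :
  injective g -> I 0 -> (forall s t, T s t -> G (g s) (g t)) ->
  Good I f G -> Good I f T.
Proof.
move=> ginj I0 TG HG B [PB BI Bz].
set A := emb g *m B *m (emb g)^T.
have PA : PG G I A.
  split.
  - by have := psd_conj ((emb g)^T) PB; rewrite trmxK.
  - move=> x y; case: (pickP (fun s => g s == x)) => [s /eqP <-|nx].
      case: (pickP (fun t => g t == y)) => [t /eqP <-|ny].
        by rewrite /A emb_push_img.
      by rewrite /A emb_push_outr // => t; rewrite ny.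
    by rewrite /A emb_push_outl // => s; rewrite nx.
  - move=> x y xy nG; case: (pickP (fun s => g s == x)) => [s /eqP ex|nx].
      case: (pickP (fun t => g t == y)) => [t /eqP ey|ny].
        rewrite -ex -ey /A emb_push_img //; apply: Bz.
          by apply: contraNneq xy => st; rewrite -ex -ey st.
        by apply: contraNN nG => /TG; rewrite ex ey.
      by rewrite /A emb_push_outr // => t; rewrite ny.
    by rewrite /A emb_push_outl // => s; rewrite nx.
have HA := HG A PA.
have -> : map_mx f B = (emb g)^T *m map_mx f A *m emb g.
  apply/matrixP => s t.
  have e : A (g s) (g t) = B s t by rewrite /A emb_push_img.
  by rewrite emb_pull [LHS]mxE [RHS]mxE e.
exact: psd_conj.
Qed.

Lemma good_embed N k (g : 'I_k -> 'I_N) I f (G : rel 'I_N) (T : rel 'I_k) :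
  injective g -> f 0 = 0 -> (forall x, 0 <= x -> 0 <= f x) ->
  (forall x y, G x y -> x != y -> exists s t, [/\ g s = x, g t = y & T s t]) ->
  Good I f T -> Good I f G.
Proof.
move=> ginj f0 fp GT HT A [PA AI Az].
set B := (emb g)^T *m A *m emb g.
have PB : PG T I B.
  split; first exact: psd_conj.
  - by move=> s t; rewrite /B emb_pull.
  - move=> s t st nT; rewrite /B emb_pull; apply: Az.
      by rewrite (inj_eq ginj).
    apply/negP => /GT []; first by rewrite (inj_eq ginj).
    by move=> s' [t' [/ginj -> /ginj ->]]; apply/negP.
have [Hs Hq] := HT B PB.
set D := \matrix_(x, y) ((x == y)%:R *
            (if [exists s, g s == x] then 0 else f (A x y))).
have -> : map_mx f A = emb g *m map_mx f B *m (emb g)^T + D.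
  apply/matrixP => x y; rewrite [LHS]mxE [RHS]mxE [D x y]mxE.
  case: (pickP (fun s => g s == x)) => [s /eqP ex|nx].
    have -> : [exists s, g s == x] by apply/existsP; exists s; rewrite ex.
    rewrite mulr0 addr0.
    case: (pickP (fun t => g t == y)) => [t /eqP ey|ny].
      by rewrite -ex -ey emb_push_img // mxE /B emb_pull.
    rewrite emb_push_outr; last by move=> t; rewrite ny.
    rewrite Az ?f0 //.
      by apply/negP => /eqP exy; move: (ny s); rewrite ex exy eqxx.
    apply/negP => Gxy; have : x != y.
      by apply/negP => /eqP exy; move: (ny s); rewrite ex exy eqxx.
    move=> /(GT _ _ Gxy) [s' [t' [_ ey _]]]; move: (ny t'); by rewrite ey eqxx.
  have -> : [exists s, g s == x] = false.
    by apply/existsP => -[s]; rewrite nx.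
  rewrite emb_push_outl; last by move=> s; rewrite nx.
  rewrite add0r; case: (eqVneq x y) => [<-|xy]; first by rewrite mul1r.
  rewrite mul0r Az ?f0 //; apply/negP => Gxy.
  by move: (GT _ _ Gxy xy) => [s [t [ex _ _]]]; move: (nx s); rewrite ex eqxx.
split.
  rewrite linearD /= !trmx_mul trmxK Hs mulmxA; congr (_ + _).
  apply/matrixP => x y; rewrite !mxE eq_sym; case: eqP => [->|]; first by [].
  by rewrite !mul0r.
move=> v; rewrite -/(qf _ _) qfD; apply: addr_ge0.
  have -> : emb g *m map_mx f B *m (emb g)^T =
            ((emb g)^T)^T *m map_mx f B *m (emb g)^T by rewrite trmxK.
  by rewrite qf_conj; apply: Hq.
apply: diag_qf_ge0 => [x y xy|x]; first by rewrite mxE (negPf xy) mul0r.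
rewrite mxE eqxx mul1r; case: ifP => // _; apply: fp.
exact: (psd_diag _ PA).
Qed.

Definition restr n (G : rel 'I_n) (S : pred 'I_n) : rel 'I_n :=
  fun x y => [&& G x y, S x & S y].

Definition bf n (A : 'M[RR]_n) (x y : 'cV[RR]_n) : RR := (x^T *m A *m y) ord0 ord0.

Lemma bfE n (A : 'M[RR]_n) x y :
  bf A x y = \sum_i \sum_j x i ord0 * A i j * y j ord0.
Proof.
rewrite /bf mxE exchange_big /=; apply: eq_bigr => j _.
rewrite mxE big_distrl /=; apply: eq_bigr => i _; by rewrite !mxE.
Qed.

Lemma bfDl n (A : 'M[RR]_n) x y z : bf A (x + y) z = bf A x z + bf A y z.
Proof. by rewrite /bf linearD /= !mulmxDl mxE. Qed.
Lemma bfDr n (A : 'M[RR]_n) x y z : bf A z (x + y) = bf A z x + bf A z y.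
Proof. by rewrite /bf mulmxDr mxE. Qed.
Lemma bf_sym n (A : 'M[RR]_n) x y : A^T = A -> bf A x y = bf A y x.
Proof.
move=> As; rewrite !bfE exchange_big; apply: eq_bigr => i _; apply: eq_bigr => j _.
have -> : A j i = A i j by rewrite -{1}As mxE.
ring.
Qed.

Definition projS n (S : pred 'I_n) : 'M[RR]_n := diag_mx (\row_i (nat_of_bool (S i))%:R).

Definition mask n (A : 'M[RR]_n) (S : pred 'I_n) v dd : 'M[RR]_n :=
  \matrix_(i, j) (if S i && S j then (if (i == v) && (j == v) then dd else A i j)
                  else 0).

Lemma mask_decomp n (A : 'M[RR]_n) (S : pred 'I_n) v dd : S v ->
  mask A S v dd = (projS S)^T *m A *m projS S + (dd - A v v) *: delta_mx v v.
Proof.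
move=> Sv; apply/matrixP => i j.
rewrite /projS tr_diag_mx mul_diag_mx mul_mx_diag !mxE.
case: (eqVneq i v) => [->|iv]; case: (eqVneq j v) => [->|jv] /=.
- by rewrite Sv /= mul1r mulr1; lra.
- by rewrite Sv; case: (S j) => /=; rewrite ?mul1r ?mulr1 ?mul0r ?mulr0 ?addr0.
- by rewrite Sv; case: (S i) => /=; rewrite ?mul1r ?mulr1 ?mul0r ?mulr0 ?addr0.
- by rewrite !mulr0 addr0; case: (S i); case: (S j); rewrite /= ?mul1r ?mulr1 ?mul0r ?mulr0.
Qed.

Lemma qf_delta n (v : 'I_n) (z : 'cV[RR]_n) : qf (delta_mx v v) z = z v ord0 ^+ 2.
Proof.
rewrite qfE (bigD1 v) //= [X in _ + X]big1 ?addr0.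
  rewrite (bigD1 v) //= big1 ?addr0; first by rewrite mxE !eqxx mulr1 expr2.
  by move=> j jv; rewrite mxE (negPf jv) andbF mulr0 mul0r.
move=> i iv; apply: big1 => j _; by rewrite mxE (negPf iv) mulr0 mul0r.
Qed.

Lemma qfZl n (A : 'M[RR]_n) c z : qf (c *: A) z = c * qf A z.
Proof. by rewrite /qf -scalemxAr -scalemxAl mxE. Qed.

Lemma qf_e n (A : 'M[RR]_n) v : qf A (\col_j (j == v)%:R) = A v v.
Proof.
rewrite qfE (eq_bigr (fun x => (v == x)%:R * A x v)) ?sum_delta // => x _.
rewrite (eq_bigr (fun y => ((v == x)%:R * A x y) * (v == y)%:R)) ?sum_delta' //.
by move=> y _; rewrite !mxE ![_ == v]eq_sym.
Qed.

Lemma side_psd n (A : 'M[RR]_n) (S : pred 'I_n) v dd :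
  psd A -> S v ->
  (forall u : 'cV[RR]_n, (forall x, ~~ S x -> u x ord0 = 0) -> u v ord0 = 1 ->
     0 <= qf A u - A v v + dd) ->
  forall z, 0 <= qf (mask A S v dd) z.
Proof.
move=> [As Aq] Sv H z; rewrite mask_decomp // qfD qf_conj qfZl qf_delta.
set t := z v ord0; set w := projS S *m z.
have wE x : w x ord0 = (nat_of_bool (S x))%:R * z x ord0.
  by rewrite /w /projS mul_diag_mx mxE mxE.
have Aw : 0 <= qf A w by apply: Aq.
case: (eqVneq t 0) => [->|t0].
  by rewrite expr0n /= mulr0 addr0.
set u := t^-1 *: w.
have Hu : 0 <= qf A u - A v v + dd.
  apply: H => [x Sx|]; first by rewrite /u mxE wE (negPf Sx) mul0r mulr0.
  by rewrite /u mxE wE Sv mul1r mulVf.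
have -> : w = t *: u by rewrite /u scalerA mulfV // scale1r.
rewrite qfZ.
have : 0 <= t ^+ 2 * (qf A u - A v v + dd) by apply: mulr_ge0 => //; apply: sqr_ge0.
lra.
Qed.

Lemma side_PG n (G : rel 'I_n) I (A : 'M[RR]_n) (S : pred 'I_n) v dd :
  PG G I A -> I 0 -> I dd ->
  (forall z, 0 <= qf (mask A S v dd) z) ->
  PG (restr G S) I (mask A S v dd).
Proof.
move=> [[As _] AI Az] I0 Idd Hq; split.
- split => //; apply/matrixP => i j; rewrite !mxE andbC.
  case: (S i && S j) => //; rewrite [(j == v) && _]andbC.
  case: ifP => // _; by rewrite -[in RHS]As mxE.
- move=> i j; rewrite mxE; case: ifP => // _; case: ifP => //.
- move=> i j ij; rewrite /restr mxE => nG.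
  case: ifP => // /andP [Si Sj]; case: ifP => [/andP [/eqP ei /eqP ej]|_].
    by rewrite ei ej eqxx in ij.
  by apply: Az => //; rewrite Si Sj !andbT in nG.
Qed.

Definition UF n (S : pred 'I_n) (v : 'I_n) : set 'cV[RR]_n :=
  [set u | (forall x, ~~ S x -> u x ord0 = 0) /\ u v ord0 = 1].

Lemma inf_facts n (A : 'M[RR]_n) (S : pred 'I_n) v :
  psd A -> S v ->
  let V := [set r | exists u, UF S v u /\ r = qf A u - A v v] in
  [/\ nonempty V, (forall u, UF S v u -> inf V <= qf A u - A v v) & inf V <= 0].
Proof.
move=> PA Sv V.
have eU : UF S v (\col_j (j == v)%:R).
  split; last by rewrite mxE eqxx.
  by move=> x Sx; rewrite mxE; case: eqVneq Sx => // -> ; rewrite Sv.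
have hl : has_lbound V.
  exists (- A v v) => r [u [_ ->]]; have := PA.2 u; rewrite -/(qf A u); lra.
have lb := ge_inf hl.
split.
- exists (qf A (\col_j (j == v)%:R) - A v v); exists (\col_j (j == v)%:R).
  split; [exact: eU | by []].
- by move=> u Uu; apply: lb; exists u.
- have := lb (qf A (\col_j (j == v)%:R) - A v v).
  rewrite qf_e subrr; apply; exists (\col_j (j == v)%:R).
  split; [exact: eU | by rewrite qf_e subrr].
Qed.

Lemma onesum N I f (G : rel 'I_N) (S1 S2 : pred 'I_N) (v : 'I_N) :
  fcond I f ->
  (forall x, S1 x || S2 x) -> (forall x, S1 x -> S2 x -> x = v) -> S1 v -> S2 v ->
  (forall x y, G x y -> x != y -> (S1 x && S1 y) || (S2 x && S2 y)) ->
  Good I f (restr G S1) -> Good I f (restr G S2) -> Good I f G.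
Proof.
move=> [f0 fp fsup _ Inn] cov cap S1v S2v cross H1 H2 A PA.
have [[As Aq] AI Az] := PA.
have psdA : psd A by [].
set d := A v v.
have [ne1 lb1 le1] := inf_facts psdA S1v.
have [ne2 lb2 le2] := inf_facts psdA S2v.
set V1 := [set r | exists u, UF S1 v u /\ r = qf A u - A v v] in ne1 lb1 le1.
set V2 := [set r | exists u, UF S2 v u /\ r = qf A u - A v v] in ne2 lb2 le2.
set m1 := inf V1 in lb1 le1; set m2 := inf V2 in lb2 le2.
have e0 : forall i j, A i j = A j i by move=> i j; rewrite -{1}As mxE.
have cross0 : forall u1 u2, UF S1 v u1 -> UF S2 v u2 ->
    0 <= (qf A u1 - d) + (qf A u2 - d) + d.
  move=> u1 u2 [U1o U1v] [U2o U2v].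
  set e : 'cV[RR]_N := \col_j (j == v)%:R.
  set x1 := u1 - e; set x2 := u2 - e.
  have x10 : forall i, x1 i ord0 != 0 -> S1 i && (i != v).
    move=> i; rewrite /x1 /e !mxE; case: (eqVneq i v) => [->|iv].
      by rewrite U1v subrr eqxx.
    case Si: (S1 i) => //; by rewrite U1o ?Si // subrr eqxx.
  have x20 : forall i, x2 i ord0 != 0 -> S2 i && (i != v).
    move=> i; rewrite /x2 /e !mxE; case: (eqVneq i v) => [->|iv].
      by rewrite U2v subrr eqxx.
    case Si: (S2 i) => //; by rewrite U2o ?Si // subrr eqxx.
  have b12 : bf A x1 x2 = 0.
    rewrite bfE; apply: big1 => i _; apply: big1 => j _.
    case: (eqVneq (x1 i ord0) 0) => [->|/x10 /andP [S1i iv]]; first by rewrite !mul0r.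
    case: (eqVneq (x2 j ord0) 0) => [->|/x20 /andP [S2j jv]]; first by rewrite mulr0.
    case: (eqVneq i j) => [eij|ij].
      by move: iv; rewrite (cap i S1i) ?eqxx // eij.
    rewrite Az ?mulr0 ?mul0r //; apply/negP => Gij.
    move: (cross _ _ Gij ij) => /orP [/andP [_ S1j]|/andP [S2i _]].
      by move: jv; rewrite (cap j S1j S2j) eqxx.
    by move: iv; rewrite (cap i S1i S2i) eqxx.
  have b21 : bf A x2 x1 = 0 by rewrite bf_sym.
  have ee : bf A e e = d by exact: qf_e.
  have eu1 : u1 = e + x1 by rewrite /x1 addrC subrK.
  have eu2 : u2 = e + x2 by rewrite /x2 addrC subrK.
  have h0 : 0 <= bf A (e + x1 + x2) (e + x1 + x2) by apply: Aq.
  have h1 : qf A u1 = bf A (e + x1) (e + x1) by rewrite eu1.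
  have h2 : qf A u2 = bf A (e + x2) (e + x2) by rewrite eu2.
  rewrite h1 h2; clearbody x1 x2 e; rewrite !(bfDl, bfDr) in h0 *.
  rewrite b12 b21 ee (bf_sym e x1 As) (bf_sym e x2 As) in h0.
  rewrite ee (bf_sym e x1 As) (bf_sym e x2 As); move: h0; clear; move: (bf A x1 e) (bf A x2 e) (bf A x1 x1) (bf A x2 x2) => a b c0 c1; lra.
have key : 0 <= m1 + m2 + d.
  have : - d - m2 <= m1.
    apply: lb_le_inf => // r1 [u1 [U1 ->]].
    rewrite -/d; suff : - (qf A u1 - d) - d <= m2 by lra.
    apply: lb_le_inf => // r2 [u2 [U2 ->]].
    have := cross0 _ _ U1 U2; rewrite -/d; lra.
  lra.
set d1 := - m1; set d2 := d + m1.
have d1ge : 0 <= d1 by rewrite /d1; lra.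
have d2ge : 0 <= d2 by rewrite /d2; lra.
have Q1 : forall z, 0 <= qf (mask A S1 v d1) z.
  apply: side_psd => // u Uo Uv; have := lb1 u (conj Uo Uv); rewrite /d1; lra.
have Q2 : forall z, 0 <= qf (mask A S2 v d2) z.
  apply: side_psd => // u Uo Uv; have := lb2 u (conj Uo Uv); rewrite /d2 -/d; lra.
have P1 := side_PG PA (Inn 0 (lexx 0)) (Inn _ d1ge) Q1.
have P2 := side_PG PA (Inn 0 (lexx 0)) (Inn _ d2ge) Q2.
have [_ F1] := H1 _ P1.
have [_ F2] := H2 _ P2.
set c := f d - f d1 - f d2.
have cge : 0 <= c.
  have := fsup _ _ d1ge d2ge; rewrite /d1 /d2 /c.
  have -> : - m1 + (d + m1) = d by ring.
  lra.
have dec : map_mx f A = map_mx f (mask A S1 v d1) + map_mx f (mask A S2 v d2)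
                        + c *: delta_mx v v.
  apply/matrixP => i j; rewrite !mxE.
  case: (eqVneq i v) => [ei|iv]; case: (eqVneq j v) => [ej|jv].
  - rewrite ei ej S1v S2v /= mulr1 /c -/d; lra.
  - rewrite andbF /= mulr0 addr0.
    case b1: (S1 i && S1 j); case b2: (S2 i && S2 j); rewrite ?f0 ?addr0 ?add0r //.
    + move/andP: b1 => [_ s1]; move/andP: b2 => [_ s2].
      by move: jv; rewrite (cap j s1 s2) eqxx.
    + have ij : i != j by rewrite ei eq_sym.
      rewrite Az ?f0 //; apply/negP => Gij.
      by move: (cross _ _ Gij ij); rewrite b1 b2.
  - rewrite /= mulr0 addr0.
    case b1: (S1 i && S1 j); case b2: (S2 i && S2 j); rewrite ?f0 ?addr0 ?add0r //.
    + move/andP: b1 => [s1 _]; move/andP: b2 => [s2 _].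
      by move: iv; rewrite (cap i s1 s2) eqxx.
    + have ij : i != j by rewrite ej.
      rewrite Az ?f0 //; apply/negP => Gij.
      by move: (cross _ _ Gij ij); rewrite b1 b2.
  - rewrite /= mulr0 addr0.
    case b1: (S1 i && S1 j); case b2: (S2 i && S2 j); rewrite ?f0 ?addr0 ?add0r //.
    + move/andP: b1 => [s1 _]; move/andP: b2 => [s2 _].
      by move: iv; rewrite (cap i s1 s2) eqxx.
    + case: (eqVneq i j) => [eij|ij].
        by move: (cov i) b1 b2; rewrite -eij !andbb => /orP [] ->.
      rewrite Az ?f0 //; apply/negP => Gij.
      by move: (cross _ _ Gij ij); rewrite b1 b2.
split; first by rewrite map_trmx As.
move=> z; rewrite -/(qf _ _) dec !qfD qfZl qf_delta.
have := F1 z; have := F2 z; rewrite -!/(qf _ _).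
have : 0 <= c * z v ord0 ^+ 2 by apply: mulr_ge0 => //; apply: sqr_ge0.
lra.
Qed.

Lemma quad_cs (a b c : RR) :
  (forall x y : RR, 0 <= a * x ^+ 2 + 2 * b * x * y + c * y ^+ 2) -> b ^+ 2 <= a * c.
Proof.
move=> H; have h1 := H c (- b); have h2 := H (- b) a; have h3 := H 1 (- b).
have ha := H 1 0; have hc := H 0 1.
case: (ltrP 0 a) => a0.
  have : 0 <= a * (a * c - b ^+ 2) by move: h2; rewrite !expr2; nra.
  rewrite pmulr_rge0 //; lra.
have a00 : a = 0 by move: ha; rewrite !expr2; nra.
move: h1 h3; rewrite a00 !expr2; nra.
Qed.

Lemma quad_pos (a b c x y : RR) :
  0 <= a -> 0 <= c -> b ^+ 2 <= a * c -> 0 <= a * x ^+ 2 + 2 * b * x * y + c * y ^+ 2.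
Proof.
move=> a0 c0 h; case: (ltrP 0 a) => ap.
  have : 0 <= a * (a * x ^+ 2 + 2 * b * x * y + c * y ^+ 2).
    have -> : a * (a * x ^+ 2 + 2 * b * x * y + c * y ^+ 2) =
      (a * x + b * y) ^+ 2 + (a * c - b ^+ 2) * y ^+ 2 by ring.
    apply: addr_ge0; first exact: sqr_ge0.
    apply: mulr_ge0; [lra | exact: sqr_ge0].
  by rewrite pmulr_rge0.
have a00 : a = 0 by lra.
move: h; rewrite a00 mul0r => h.
have b0 : b = 0 by move: h; rewrite expr2; nra.
rewrite b0; rewrite !expr2; nra.
Qed.

Lemma qf2 (M : 'M[RR]_2) z :
  qf M z = M ord0 ord0 * z ord0 ord0 ^+ 2 +
           (M ord0 (lift ord0 ord0) + M (lift ord0 ord0) ord0) *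
             z ord0 ord0 * z (lift ord0 ord0) ord0 +
           M (lift ord0 ord0) (lift ord0 ord0) * z (lift ord0 ord0) ord0 ^+ 2.
Proof.
rewrite qfE !big_ord_recl !big_ord0 !addr0 /= !expr2; ring.
Qed.

Lemma good2 I f (G : rel 'I_2) : fcond I f -> Good I f G.
Proof.
move=> [f0 fp fsup f2 Inn] A [PA AI Az].
have [As Aq] := PA.
set i1 : 'I_2 := lift ord0 ord0.
have e10 : A i1 ord0 = A ord0 i1 by rewrite -{1}As mxE.
have a0 := psd_diag ord0 PA; have c0 := psd_diag i1 PA.
have hb : A ord0 i1 ^+ 2 <= A ord0 ord0 * A i1 i1.
  apply: quad_cs => x y.
  have := Aq (\col_i (if i == ord0 then x else y)); rewrite -/(qf _ _) qf2 !mxE /=.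
  rewrite e10; have -> : A ord0 i1 + A ord0 i1 = 2 * A ord0 i1 by ring.
  by [].
split; first by rewrite map_trmx As.
move=> z; rewrite -/(qf _ _) qf2 !mxE e10.
have -> : f (A ord0 i1) + f (A ord0 i1) = 2 * f (A ord0 i1) by ring.
apply: quad_pos; [exact: fp | exact: fp | exact: f2].
Qed.

Lemma good_edgeless N I f (G : rel 'I_N) :
  f 0 = 0 -> (forall x, 0 <= x -> 0 <= f x) ->
  (forall x y, x != y -> ~~ G x y) -> Good I f G.
Proof.
move=> f0 fp nG A [PA AI Az]; split; first by rewrite map_trmx PA.1.
move=> z; apply: diag_qf_ge0 => [i j ij|i]; rewrite mxE.
  by rewrite Az ?f0 // nG.
by apply: fp; apply: psd_diag.
Qed.

Lemma good_edge N I f (G : rel 'I_N) (u w : 'I_N) : fcond I f -> u != w ->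
  (forall x y, G x y -> x != y -> ((x == u) && (y == w)) || ((x == w) && (y == u))) ->
  Good I f G.
Proof.
move=> fc uw H; have [f0 fp _ _ _] := fc.
pose g := fun s : 'I_2 => if s == ord0 then u else w.
have ginj : injective g.
  move=> s t; rewrite /g.
  case: (eqVneq s ord0) => [->|s0]; case: (eqVneq t ord0) => [->|t0] //.
  - by move=> e; rewrite e eqxx in uw.
  - by move=> e; rewrite e eqxx in uw.
  - move=> _; apply: val_inj; move: s0 t0; rewrite -!val_eqE /=.
    by case: s => [[|[|s]] hs] //; case: t => [[|[|t]] ht].
apply: (@good_embed _ _ g I f G (fun _ _ => true)) => //; last exact: good2.
move=> x y Gxy xy; case/orP: (H x y Gxy xy) => /andP [/eqP -> /eqP ->].
  by exists ord0, (lift ord0 ord0).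
by exists (lift ord0 ord0), ord0.
Qed.

Definition E N (G : rel 'I_N) : {set 'I_N * 'I_N} := finset (fun p => G p.1 p.2).

Lemma card_restr_lt N (G : rel 'I_N) S x y :
  G x y -> ~~ (S x && S y) -> (#|E (restr G S)| < #|E G|)%N.
Proof.
move=> Gxy nS; apply: proper_card; apply/fintype.properP; split.
  by apply/fintype.subsetP => p; rewrite !finset.inE /restr => /andP [].
exists (x, y); first by rewrite finset.inE.
by rewrite finset.inE /restr /= Gxy /=; move: nS; case: (S x); case: (S y).
Qed.

Lemma acyclic_sub N (G G' : rel 'I_N) :
  (forall x y, G' x y -> G x y) -> acyclic G -> acyclic G'.
Proof.
move=> sub acy x p up pp sz; apply/negP => h.
have := acy x p up (sub_path sub pp) sz; by rewrite (sub _ _ h).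
Qed.

Lemma forest_good I f : fcond I f -> forall k N (G : rel 'I_N),
  symmetric G -> irreflexive G -> acyclic G -> (#|E G| <= k)%N -> Good I f G.
Proof.
move=> fc; have [f0 fp _ _ _] := fc.
elim=> [|k IH] N G Gs Gi Ga.
  rewrite leqn0 => /eqP /cards0_eq E0; apply: good_edgeless => // x y _.
  apply/negP => Gxy; have : (x, y) \in E G by rewrite finset.inE.
  by rewrite E0 finset.inE.
move=> Gk.
case: (pickP (fun p : 'I_N * 'I_N => G p.1 p.2)) => [[u w] /= Guw|none]; last first.
  apply: good_edgeless => // x y _; by rewrite (none (x, y)).
have uw : u != w by apply/negP => /eqP e; rewrite e Gi in Guw.
have IHr : forall S, (exists x y, G x y /\ ~~ (S x && S y)) -> Good I f (restr G S).
  move=> S [x [y [Gxy nS]]]; apply: IH.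
  - by move=> a b; rewrite /restr Gs; congr (_ && _); apply: andbC.
  - by move=> a; rewrite /restr Gi.
  - by apply: acyclic_sub Ga => a b /andP [].
  - by rewrite -ltnS; apply: leq_trans Gk; apply: card_restr_lt Gxy nS.
pose Ge := fun x y => G x y && ~~ (((x == u) && (y == w)) || ((x == w) && (y == u))).
pose C := fun x => connect Ge u x.
have Cu : C u by exact: connect0.
have Cw : ~~ C w.
  apply/negP => /connectP [p pp wl]; move: wl.
  case/shortenP: pp => p' pp' up' _ wl.
  case: p' pp' up' wl => [|a [|b r]] /=.
  - by move=> _ _ e; move: uw; rewrite e eqxx.
  - by move=> /andP [Gua _] _ ea; move: Gua; rewrite -ea /Ge !eqxx /= andbF.
  - move=> pp' up' wl.
    have GeG : subrel Ge G by move=> x y /andP [].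
    have := Ga u [:: a, b & r] up' (sub_path GeG (pp' : path Ge u [:: a, b & r])) isT.
    by rewrite /= -wl Gs Guw.
have CGe : forall x y, C x -> Ge x y -> C y.
  by move=> x y Cx Gxy; apply: connect_trans Cx (connect1 Gxy).
have crossC : forall x y, G x y -> C x -> ~~ C y -> (x == u) && (y == w).
  move=> x y Gxy Cx nCy.
  case: (boolP (Ge x y)) => [/(CGe _ _ Cx) Cy|]; first by rewrite Cy in nCy.
  rewrite /Ge Gxy /= negbK => /orP [//|/andP [/eqP ex _]].
  by move: Cx; rewrite ex (negPf Cw).
case: (boolP [exists x, exists y, G x y && ~~ ((C x || (x == w)) && (C y || (y == w)))]).
- case/existsP => x /existsP [y /andP [Gxy nS]].
  apply: (@onesum N I f G (fun x => C x || (x == w)) (fun x => ~~ C x) w) => //.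
  + by move=> a; case: (C a); rewrite /= ?orbT.
  + by move=> a /orP [-> //|/eqP ->].
  + by rewrite eqxx orbT.
  + move=> a b Gab ab; case Ca: (C a); case Cb: (C b); rewrite /= ?orbT //.
    * by have := crossC _ _ Gab; rewrite Ca Cb => /(_ isT isT) /andP [_ ->].
    * have Gba : G b a by rewrite Gs.
      have := crossC _ _ Gba; rewrite Ca Cb => /(_ isT isT).
      by case/andP => _ ->.
  + by apply: IHr; exists x, y.
  + by apply: IHr; exists u, w; rewrite Guw Cu.
- move=> nex.
  have allS : forall x y, G x y -> (C x || (x == w)) && (C y || (y == w)).
    move=> x y Gxy; apply: contraNT nex => h; apply/existsP; exists x.
    by apply/existsP; exists y; rewrite Gxy.
  apply: (@onesum N I f G C (fun x => ~~ C x || (x == u)) u) => //.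
  + by move=> a; case: (C a); rewrite /= ?orbT.
  + by move=> a -> /= /eqP.
  + by rewrite eqxx orbT.
  + move=> a b Gab ab; case Ca: (C a); case Cb: (C b); rewrite /= ?orbT //.
    * by have := crossC _ _ Gab; rewrite Ca Cb => /(_ isT isT) /andP [-> _].
    * have Gba : G b a by rewrite Gs.
      have := crossC _ _ Gba; rewrite Ca Cb => /(_ isT isT).
      by case/andP => -> _.
  + by apply: IHr; exists u, w; rewrite Guw Cu /= (negPf Cw).
  + apply: (good_edge fc uw) => x y /andP [Gxy /andP [Sx Sy]] xy.
    have /andP [S1x S1y] := allS _ _ Gxy.
    have hx : (x == u) || (x == w).
      by move: Sx S1x; case: (C x) => /=; [move=> /eqP -> | move=> _ /eqP ->]; rewrite eqxx ?orbT.
    have hy : (y == u) || (y == w).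
      by move: Sy S1y; case: (C y) => /=; [move=> /eqP -> | move=> _ /eqP ->]; rewrite eqxx ?orbT.
    move: xy; case/orP: hx => /eqP ->; case/orP: hy => /eqP -> //;
      by rewrite !eqxx ?orbT.
Qed.

Lemma rpowE (x a : RR) : a != 0 -> rpow x a = x `^ a.
Proof.
rewrite /rpow; case: (eqVneq x 0) => [->|//] a0; by rewrite powR0.
Qed.

Lemma powR_sup (x y a : RR) : 0 <= x -> 0 <= y -> 1 <= a -> x `^ a + y `^ a <= (x + y) `^ a.
Proof.
move=> x0 y0 a1.
case: (eqVneq (x + y) 0) => [s0|s0].
  have x00 : x = 0 by lra.
  have y00 : y = 0 by lra.
  rewrite x00 y00 addr0 powR0 ?addr0 //; lra.
have sp : 0 < x + y by rewrite lt_def s0; lra.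
have a10 : 0 <= a - 1 by lra.
case: (eqVneq a 1) => [->|a1'].
  by rewrite !powRr1 //; lra.
have ap : 0 < a - 1 + 1 by lra.
have -> : a = (a - 1) + 1 by ring.
rewrite -!(mulr_powRB1 _ ap) //; last lra.
have -> : a - 1 + 1 - 1 = a - 1 by ring.
have hx : x `^ (a - 1) <= (x + y) `^ (a - 1).
  by apply: ge0_ler_powR => //; rewrite ?nnegrE //; lra.
have hy : y `^ (a - 1) <= (x + y) `^ (a - 1).
  by apply: ge0_ler_powR => //; rewrite ?nnegrE //; lra.
rewrite mulrDl; apply: lerD; by apply: ler_wpM2l.
Qed.

Lemma powR_2 (x y z a : RR) : 0 <= x -> 0 <= y -> 0 <= z -> 0 <= a -> y ^+ 2 <= x * z ->
  (y `^ a) ^+ 2 <= x `^ a * z `^ a.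
Proof.
move=> x0 y0 z0 a0 h; rewrite expr2 -powRM // -powRM //.
apply: ge0_ler_powR => //; rewrite ?nnegrE ?(mulr_ge0 x0 z0) ?(mulr_ge0 y0 y0) // -expr2.
Qed.

Lemma fcond_rpow a : 1 <= a -> fcond [set x | 0 <= x] (rpow ^~ a).
Proof.
move=> a1; have a0 : a != 0 by apply/eqP => e; rewrite e in a1; lra.
split.
- by rewrite /rpow eqxx.
- by move=> x _; rewrite rpowE // powR_ge0.
- by move=> x y x0 y0; rewrite !rpowE //; apply: powR_sup.
- move=> x y z /= y0 x0 z0 h; rewrite !rpowE //; apply: powR_2 => //; lra.
- by [].
Qed.

Lemma psi_sq a (y : RR) : psi_ a y ^+ 2 = rpow `|y| a ^+ 2.
Proof.
rewrite /psi_; case: (ltrgtP y 0) => [yn|yp|->].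
- by rewrite ltr0_sg // exprMn sqrrN expr1n mul1r.
- by rewrite gtr0_sg // mul1r.
- by rewrite sgr0 normr0 /rpow eqxx mul0r.
Qed.

Lemma psi_nn a (x : RR) : 0 <= x -> psi_ a x = rpow x a.
Proof.
rewrite /psi_ le_eqVlt => /orP [/eqP <-|xp]; first by rewrite sgr0 mul0r /rpow eqxx.
by rewrite gtr0_sg // mul1r gtr0_norm.
Qed.

Lemma phi_nn a (x : RR) : 0 <= x -> phi_ a x = rpow x a.
Proof. by move=> x0; rewrite /phi_ ger0_norm. Qed.

Lemma fcond_psi a : 1 <= a -> fcond setT (psi_ a).
Proof.
move=> a1; have [r0 rp rs r2 _] := fcond_rpow a1.
split.
- by rewrite psi_nn.
- by move=> x x0; rewrite psi_nn // rp.
- by move=> x y x0 y0; rewrite !psi_nn ?addr_ge0 //; apply: rs.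
- move=> x y z _ x0 z0 h; rewrite psi_sq !psi_nn //; apply: r2 => //=.
  by rewrite real_normK ?num_real.
- by [].
Qed.

Lemma fcond_phi a : 1 <= a -> fcond setT (phi_ a).
Proof.
move=> a1; have [r0 rp rs r2 _] := fcond_rpow a1.
split.
- by rewrite phi_nn.
- by move=> x x0; rewrite phi_nn // rp.
- by move=> x y x0 y0; rewrite !phi_nn ?addr_ge0 //; apply: rs.
- move=> x y z _ x0 z0 h; rewrite /phi_ (ger0_norm x0) (ger0_norm z0); apply: r2 => //=.
  by rewrite real_normK ?num_real.
- by [].
Qed.

Definition T3 : rel 'I_3 := fun s t => (val s == 0%N) != (val t == 0%N).

Definition M3 : 'M[RR]_3 :=
  \matrix_(s, t) (if s == t then (if val s == 0%N then 2 else 1)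
                  else if T3 s t then 1 else 0).

Lemma qf3 (M : 'M[RR]_3) z : qf M z =
  \sum_(i < 3) \sum_(j < 3) z i ord0 * M i j * z j ord0.
Proof. by rewrite qfE. Qed.

Lemma M3_PG : PG T3 [set x | 0 <= x] M3.
Proof.
split.
- split.
    apply/matrixP => s t; rewrite !mxE eq_sym.
    case: eqP => [->|] //; by rewrite /T3 eq_sym.
  move=> z; rewrite -/(qf _ _) qfE !big_ord_recl !big_ord0 !mxE /=.
  move: (z ord0 ord0) (z (lift ord0 ord0) ord0) (z (lift ord0 (lift ord0 ord0)) ord0) => a b c.
  have h1 := sqr_ge0 (a + b); have h2 := sqr_ge0 (a + c); rewrite !expr2 in h1 h2; nra.
- by move=> s t; rewrite mxE /=; case: ifP => _; case: ifP => _; lra.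
- by move=> s t st nT; rewrite mxE (negPf st) (negPf nT).
Qed.

Lemma two_le_pow (a : RR) : 2 <= 2 `^ a -> 1 <= a.
Proof.
move=> h.
have l2 : 0 < ln (2 : RR) by apply: ln_gt0; lra.
have : ln (2 : RR) <= ln (2 `^ a).
  by rewrite ler_ln // ?posrE ?powR_gt0 //; lra.
rewrite ln_powR => h2.
rewrite -(ler_pM2r l2) mul1r //.
Qed.

Lemma P3_bound n (G : rel 'I_n) a (v u w : 'I_n) :
  irreflexive G -> symmetric G -> u != w -> G v u -> G v w ->
  Good [set x | 0 <= x] (rpow ^~ a) G -> 1 <= a.
Proof.
move=> Gi Gs uw Gvu Gvw HG.
have vu : v != u by apply/negP => /eqP e; rewrite e Gi in Gvu.
have vw : v != w by apply/negP => /eqP e; rewrite e Gi in Gvw.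
pose g := fun s : 'I_3 => if val s == 0%N then v else if val s == 1%N then u else w.
have ginj : injective g.
  move=> [[|[|[|s]]] hs] [[|[|[|t]]] ht] //= e; apply: val_inj => //=;
    move: e; rewrite /g /=; move=> e;
    by move: vu vw uw; rewrite e ?eqxx //= ?andbF.
have H3 : Good [set x | 0 <= x] (rpow ^~ a) T3.
  apply: (good_restrict ginj) HG => //=.
  move=> [[|[|[|s]]] hs] [[|[|[|t]]] ht] //=; rewrite /T3 /g /= => _;
    by rewrite ?Gvu ?Gvw // Gs.
have [_ Hq] := H3 _ M3_PG.
have := Hq (\col_s (if val s == 0%N then 1 else -1)).
rewrite -/(qf _ _) qfE !big_ord_recl !big_ord0 !mxE /=.
have r1 : rpow 1 a = 1 by rewrite /rpow oner_eq0 powR1.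
have r0 : rpow 0 a = 0 by rewrite /rpow eqxx.
rewrite /rpow oner_eq0 powR1 eqxx /= ?pnatr_eq0 /=.
move=> h; apply: two_le_pow; move: h; set p := 2 `^ a; lra.
Qed.

Section Attach.
Variables (n m : nat) (G : rel 'I_n) (T : rel 'I_m.+1) (v : 'I_n).

Lemma split_l (a : 'I_n) : split (lshift m a) = inl a.
Proof. exact: (unsplitK (inl a)). Qed.
Lemma split_r (k : 'I_m) : split (rshift n k) = inr k.
Proof. exact: (unsplitK (inr k)). Qed.

Lemma ord_nm_ind (P : 'I_(n + m) -> Prop) :
  (forall a, P (lshift m a)) -> (forall k, P (rshift n k)) -> forall x, P x.
Proof. move=> Hl Hr x; rewrite -(splitK x); by case: (split x). Qed.

Definition g2 (s : 'I_m.+1) : 'I_(n + m) :=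
  if unlift ord0 s is Some k then rshift n k else lshift m v.

Lemma label_g2 s : tree_label v (g2 s) = Some s.
Proof.
rewrite /g2 /tree_label; case: unliftP => [k ->|->]; first by rewrite split_r.
by rewrite split_l eqxx.
Qed.

Lemma g2_inj : injective g2.
Proof. move=> s t e; have := label_g2 s; rewrite e label_g2; by case. Qed.

Lemma g2_label x s : tree_label v x = Some s -> g2 s = x.
Proof.
elim/ord_nm_ind: x => [a|k]; rewrite /tree_label ?split_l ?split_r.
  case: eqP => [-> [<-]|_ //]; by rewrite /g2 unlift_none.
by case=> <-; rewrite /g2 liftK.
Qed.

Definition S1 (x : 'I_(n + m)) : bool := if split x is inl _ then true else false.
Definition S2 (x : 'I_(n + m)) : bool := tree_label v x != None.

Lemma attach_good I f : fcond I f -> irreflexive T ->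
  Good I f G -> Good I f T -> Good I f (attach G T v).
Proof.
move=> fc Ti HG HT; have [f0 fp _ _ _] := fc.
apply: (@onesum _ I f _ S1 S2 (lshift m v)) => //.
- by elim/ord_nm_ind => [a|k]; rewrite /S1 /S2 /tree_label ?split_l ?split_r.
- elim/ord_nm_ind => [a|k]; rewrite /S1 /S2 /tree_label ?split_l ?split_r //.
  by move=> _; case: (eqVneq a v) => [->|av] //; rewrite (negPf av).
- by rewrite /S1 split_l.
- by rewrite /S2 /tree_label split_l eqxx.
- move=> x y; rewrite /attach => /orP [].
    by case E1: (split x) => //; case E2: (split y) => //; rewrite /S1 E1 E2.
  rewrite /S2; case: (tree_label v x) => // s; case: (tree_label v y) => // t _ _.
  by rewrite orbT.
- apply: (@good_embed _ _ (lshift m) I f _ G) => //; first exact: lshift_inj.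
  elim/ord_nm_ind => [a|k]; elim/ord_nm_ind => [b|l];
    rewrite /restr /S1 ?split_l ?split_r ?andbF ?andbT //.
  rewrite /attach /tree_label !split_l => /orP [Gab _|Tp ab].
    by exists a, b.
  move: Tp ab; case: (eqVneq a v) => [->|] //; case: (eqVneq b v) => [->|] //.
  by rewrite Ti.
- apply: (@good_embed _ _ g2 I f _ T) => //; first exact: g2_inj.
  move=> x y /andP [Axy /andP [Sx Sy]] xy.
  move: Sx Sy; rewrite /S2.
  case Lx: (tree_label v x) => [s|] // _; case Ly: (tree_label v y) => [t|] // _.
  exists s, t; split; [exact: g2_label | exact: g2_label |].
  move: Axy; rewrite /attach Lx Ly => /orP [|//].
  move: Lx Ly xy; elim/ord_nm_ind: x => [a|k]; elim/ord_nm_ind: y => [b|l];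
    rewrite /tree_label ?split_l ?split_r //.
  case: eqP => // -> [<-]; case: eqP => // -> [<-]; by rewrite eqxx.
Qed.

Lemma attach_restrict I f : I 0 -> Good I f (attach G T v) -> Good I f G.
Proof.
move=> I0; apply: (good_restrict (@lshift_inj _ _)) => // a b Gab.
by rewrite /attach !split_l Gab.
Qed.

End Attach.

Lemma H_good n (G : rel 'I_n) a : H_ G a <-> Good [set x | 0 <= x] (rpow ^~ a) G.
Proof.
split => [H A PA|H A PA]; first by have [] := H A PA.
by apply: (PG_map _ PA); [rewrite /rpow eqxx | apply: H].
Qed.

Lemma Hpsi_good n (G : rel 'I_n) a : Hpsi G a <-> Good setT (psi_ a) G.
Proof.
split => [H A PA|H A PA]; first by have [] := H A PA.
by apply: (PG_map _ PA); [rewrite /psi_ sgr0 mul0r | apply: H].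
Qed.

Lemma Hphi_good n (G : rel 'I_n) a : Hphi G a <-> Good setT (phi_ a) G.
Proof.
split => [H A PA|H A PA]; first by have [] := H A PA.
by apply: (PG_map _ PA); [rewrite /phi_ normr0 /rpow eqxx | apply: H].
Qed.

Lemma nn_setT n (G : rel 'I_n) A : PG G [set x | 0 <= x] A -> PG G setT A.
Proof. by case. Qed.

Lemma psi_rpow n (G : rel 'I_n) a :
  Good setT (psi_ a) G -> Good [set x | 0 <= x] (rpow ^~ a) G.
Proof.
move=> H A PA; have [_ AI _] := PA.
have -> : map_mx (rpow ^~ a) A = map_mx (psi_ a) A.
  by apply/matrixP => i j; rewrite !mxE psi_nn //; apply: AI.
exact: H (nn_setT PA).
Qed.

Lemma phi_rpow n (G : rel 'I_n) a :
  Good setT (phi_ a) G -> Good [set x | 0 <= x] (rpow ^~ a) G.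
Proof.
move=> H A PA; have [_ AI _] := PA.
have -> : map_mx (rpow ^~ a) A = map_mx (phi_ a) A.
  by apply/matrixP => i j; rewrite !mxE phi_nn //; apply: AI.
exact: H (nn_setT PA).
Qed.

Lemma obtained_good I (fam : RR -> RR -> RR) :
  (forall a, 1 <= a -> fcond I (fam a)) ->
  (forall n (G : rel 'I_n) a, Good I (fam a) G -> Good [set x | 0 <= x] (rpow ^~ a) G) ->
  I 0 ->
  forall n' (G' : rel 'I_n'), simple_graph G' ->
  (exists v u w : 'I_n', [/\ u != w, G' v u & G' v w]) ->
  forall n (G : rel 'I_n), obtained G' G ->
  forall a, Good I (fam a) G <-> Good I (fam a) G'.
Proof.
move=> Pf Pr I0 n' G' [G's G'i] [v [u [w [uw Gvu Gvw]]]] n G ob.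
elim: ob => [//|{}n {}G m T v0 ob IH _ [[Ts Ti] _ Ta]] a.
split.
- by move=> /(attach_restrict I0) /IH.
- move=> HG'.
  have a1 : 1 <= a by apply: (P3_bound G'i G's uw Gvu Gvw (Pr _ _ _ HG')).
  apply: attach_good => //; first exact: Pf.
    by apply/IH.
  exact: (forest_good (Pf a a1) Ts Ti Ta (leqnn _)).
Qed.

Lemma tree_deg2 n (T : rel 'I_n) : is_tree T -> (3 <= n)%N ->
  exists v u w : 'I_n, [/\ u != w, T v u & T v w].
Proof.
move=> [[Ts Ti] Tc _] n3.
have mid : forall x y, x != y ->
    T x y \/ (exists v u w : 'I_n, [/\ u != w, T v u & T v w]).
  move=> x y xy; have := Tc x y; case/connectP => p pp yl.
  move: yl; case/shortenP: pp => p' pp' up' _ yl.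
  case: p' pp' up' yl => [|a [|b r]] /=.
  - by move=> _ _ e; rewrite e eqxx in xy.
  - by move=> /andP [Txa _] _ ->; left.
  - move=> /and3P [Txa Tab _] /andP [nx _] _; right; exists a, x, b.
    split; [|by rewrite Ts|by []].
    by apply: contraNneq nx => ->; rewrite !inE eqxx orbT.
pose x0 : 'I_n := Ordinal (leq_trans (isT : (0 < 3)%N) n3).
pose x1 : 'I_n := Ordinal (leq_trans (isT : (1 < 3)%N) n3).
pose x2 : 'I_n := Ordinal (leq_trans (isT : (2 < 3)%N) n3).
have [T01|//] := mid x0 x1 isT.
have [T02|//] := mid x0 x2 isT.
by exists x0, x1, x2.
Qed.

Lemma seteq_iff (S1 S2 : set RR) : (forall a, S1 a <-> S2 a) -> S1 = S2.
Proof. by move=> H; apply/funext => a; apply/propext. Qed.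

Theorem theorem2p2 :
  (forall (n' : nat) (G' : rel 'I_n'),
     simple_graph G' ->
     (exists v u w : 'I_n', [/\ u != w, G' v u & G' v w]) ->
     forall (n : nat) (G : rel 'I_n), obtained G' G ->
       [/\ H_ G = H_ G', Hpsi G = Hpsi G' & Hphi G = Hphi G'])
  /\
  (forall (n : nat) (T : rel 'I_n), is_tree T -> (3 <= n)%N ->
     [/\ is_min (CEset (H_ T)) 1, is_min (CEset (Hphi T)) 1
       & is_min (CEset (Hpsi T)) 1]).
Proof.
split.
  move=> n' G' sG wit n G ob; split; apply: seteq_iff => a.
  - rewrite !H_good.
    exact: (obtained_good (I := [set x | 0 <= x]) (fam := fun a x => rpow x a)
             fcond_rpow (fun _ _ _ H => H) (lexx 0) sG wit ob).
  - rewrite !Hpsi_good.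
    exact: (obtained_good (I := setT) (fam := psi_) fcond_psi
             (fun n G a H => psi_rpow H) I sG wit ob).
  - rewrite !Hphi_good.
    exact: (obtained_good (I := setT) (fam := phi_) fcond_phi
             (fun n G a H => phi_rpow H) I sG wit ob).
move=> n T Tt n3.
have [[Ts Ti] _ Ta] := Tt.
have [v [u [w [uw Tvu Tvw]]]] := tree_deg2 Tt n3.
have bound : forall a, Good [set x | 0 <= x] (rpow ^~ a) T -> 1 <= a.
  by move=> a; apply: (P3_bound Ti Ts uw Tvu Tvw).
split; split.
- move=> b b1; apply/H_good.
  exact: (forest_good (fcond_rpow b1) Ts Ti Ta (leqnn _)).
- by move=> a /(_ a (lexx a)) /H_good /bound.
- move=> b b1; apply/Hphi_good.
  exact: (forest_good (fcond_phi b1) Ts Ti Ta (leqnn _)).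
- by move=> a /(_ a (lexx a)) /Hphi_good /phi_rpow /bound.
- move=> b b1; apply/Hpsi_good.
  exact: (forest_good (fcond_psi b1) Ts Ti Ta (leqnn _)).
- by move=> a /(_ a (lexx a)) /Hpsi_good /psi_rpow /bound.
Qed.
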